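(* If a judgment aggregation rule is strategyproof (with respect to Hamming-distance preferences and any extension of them to sets of judgments satisfying requirements (R1) and (R2)), then it satisfies neither the maximin property nor the equity property.
   Context: An agenda is a finite nonempty list $\Phi=(\phi_1,\dots,\phi_m)$ of propositional formulas; a judgment is $J\in\{0,1\}^m$, $J(\phi_k)$ its $k$-th entry. $\mathcal{J}(\Phi)\subseteq\{0,1\}^m$ is the nonempty set of admissible judgments; the agenda may be chosen so that $\mathcal{J}(\Phi)$ is any prescribed nonempty set of vectors. For a finite set of agents $N$, $|N|=n\ge2$, a profile is $\mathbf{P}=(J_1,\dots,J_n)\in\mathcal{J}(\Phi)^n$; $\mathbf{P}'=_{-i}\mathbf{P}$ means $\mathbf{P}'$ and $\mathbf{P}$ differ at most in agent $i$'s judgment. A rule $F$ maps every profile (every finite group, every agenda) to a nonempty $F(\mathbf{P})\subseteq\mathcal{J}(\Phi)$. Hamming distance $H(J,J')=\sum_k|J(\phi_k)-J'(\phi_k)|$. Preferences: agent $i$ with truthful judgment $J_i$ has $J\succeq_i J'$ iff $H(J_i,J)\le H(J_i,J')$ (strict part $\succ_i$). A preference $\mathrel{\mathring{\succeq}}_i$ over subsets of $\mathcal{J}(\Phi)$, with strict part $\mathrel{\mathring{\succ}}_i$, must satisfy (R1) $J\succeq_i J'$ iff $\{J\}\mathrel{\mathring{\succeq}}_i\{J'\}$; (R2) $X\mathrel{\mathring{\succ}}_i Y$ implies there exist $J\in X$, $J'\in Y$ with $J\succ_i J'$ and $\{J,J'\}\not\subseteq X\cap Y$. $F$ is manipulable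 by agent $i$ in $\mathbf{P}$ if there is $\mathbf{P}'=_{-i}\mathbf{P}$ with $F(\mathbf{P}')\mathrel{\mathring{\succ}}_i F(\mathbf{P})$; $F$ is strategyproof if it is not manipulable by any agent in any profile. Maximin property: for all $\mathbf{P}$ and $J\in F(\mathbf{P})$ there are no $J'\in\mathcal{J}(\Phi)$, $j\in N$ with $H(J_i,J')<H(J_j,J)$ for all $i\in N$. Equity property: for all $\mathbf{P}$ and $J\in F(\mathbf{P})$ there are no $J'\in\mathcal{J}(\Phi)$, $i',j'\in N$ with $|H(J_i,J')-H(J_j,J')|<|H(J_{i'},J)-H(J_{j'},J)|$ for all $i,j\in N$. *)

(* Defs.v *)
From mathcomp Require Import all_boot.
Set Implicit Arguments.
Unset Strict Implicit.
Unset Printing Implicit Defensive.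

Inductive form : Type :=
  | Var of nat
  | Neg of form
  | And of form & form
  | Or of form & form.

Fixpoint eval (v : nat -> bool) (f : form) : bool :=
  match f with
  | Var x => v x
  | Neg g => ~~ eval v g
  | And g h => eval v g && eval v h
  | Or g h => eval v g || eval v h
  end.

(* An agenda of length m is an m-tuple of formulas; a judgment is a 0/1
   vector of length m (true = 1). *)
Definition judg (m : nat) := {ffun 'I_m -> bool}.

Definition admissible (m : nat) (Phi : m.-tuple form) (J : judg m) : Prop :=
  exists v : nat -> bool, forall k : 'I_m, J k = eval v (tnth Phi k).

Definition profile (m n : nat) := {ffun 'I_n -> judg m}.

Definition adm_profile (m n : nat) (Phi : m.-tuple form) (P : profile m n) : Prop :=
  forall i : 'I_n, admissible Phi (P i).

Definition hamming (m : nat) (J J' : judg m) : nat :=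
  \sum_(k < m) (J k != J' k).

Definition absdiff (a b : nat) : nat := (a - b) + (b - a).

Definition rule := forall (m : nat) (Phi : m.-tuple form) (n : nat),
  profile m n -> {set judg m}.

Definition is_rule (F : rule) : Prop :=
  forall m (Phi : m.-tuple form) n (P : profile m n),
    0 < m -> 1 < n -> adm_profile Phi P ->
    F m Phi n P != set0 /\ (forall J, J \in F m Phi n P -> admissible Phi J).

(* A family of set preferences: for agenda Phi, group 'I_n, agent i with
   truthful judgment Ji, a relation "X is weakly preferred to Y". *)
Definition set_ext := forall (m : nat) (Phi : m.-tuple form) (n : nat)
  (i : 'I_n) (Ji : judg m), rel {set judg m}.

Definition strict (T : Type) (r : rel T) (x y : T) : bool := r x y && ~~ r y x.

Definition subset_adm (m : nat) (Phi : m.-tuple form) (X : {set judg m}) : Prop :=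
  X != set0 /\ (forall J, J \in X -> admissible Phi J).

Definition valid_ext (E : set_ext) : Prop :=
  forall m (Phi : m.-tuple form) n (i : 'I_n) (Ji : judg m),
    0 < m -> 1 < n -> admissible Phi Ji ->
    (forall J J', admissible Phi J -> admissible Phi J' ->
       (hamming Ji J <= hamming Ji J') <-> E m Phi n i Ji [set J] [set J'])
    /\
    (forall X Y, subset_adm Phi X -> subset_adm Phi Y ->
       strict (E m Phi n i Ji) X Y ->
       exists J, exists J', [/\ J \in X, J' \in Y,
         hamming Ji J < hamming Ji J' &
         ~~ ((J \in X :&: Y) && (J' \in X :&: Y))]).

Definition strategyproof (F : rule) (E : set_ext) : Prop :=
  forall m (Phi : m.-tuple form) n (P P' : profile m n) (i : 'I_n),
    0 < m -> 1 < n -> adm_profile Phi P -> adm_profile Phi P' ->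
    (forall j, j != i -> P' j = P j) ->
    ~ strict (E m Phi n i (P i)) (F m Phi n P') (F m Phi n P).

Definition maximin (F : rule) : Prop :=
  forall m (Phi : m.-tuple form) n (P : profile m n) (J : judg m),
    0 < m -> 1 < n -> adm_profile Phi P -> J \in F m Phi n P ->
    ~ exists J' : judg m, exists j : 'I_n,
        admissible Phi J' /\ forall i : 'I_n, hamming (P i) J' < hamming (P j) J.

Definition equity (F : rule) : Prop :=
  forall m (Phi : m.-tuple form) n (P : profile m n) (J : judg m),
    0 < m -> 1 < n -> adm_profile Phi P -> J \in F m Phi n P ->
    ~ exists J' : judg m, exists i' : 'I_n, exists j' : 'I_n,
        admissible Phi J' /\ forall i j : 'I_n,
          absdiff (hamming (P i) J') (hamming (P j) J')
          < absdiff (hamming (P i') J) (hamming (P j') J).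

(* Main.v *)
Require Import Defs.
From mathcomp Require Import all_boot.

Definition mk (s : seq bool) : judg 4 := [ffun k : 'I_4 => nth false s k].
Definition ja := mk [:: false; false; false; false].
Definition jb := mk [:: false; false; false; true].
Definition jc := mk [:: false; false; true; false].
Definition jd := mk [:: true; true; false; true].

Definition fAB := And (Var 0) (Var 1).
Definition Phi4 : 4.-tuple form :=
  [tuple fAB; fAB; And (Var 0) (Neg (Var 1)); Var 1].

Lemma adm_char {J} : admissible Phi4 J -> [\/ J = ja, J = jb, J = jc | J = jd].
Proof.
case=> v Hv.
have HJ : J = [ffun k => eval v (tnth Phi4 k)] by apply/ffunP=> k; rewrite ffunE Hv.
rewrite HJ; case E0: (v 0); case E1: (v 1);
  [apply: Or44|apply: Or43|apply: Or42|apply: Or41];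
  apply/ffunP => k; rewrite !ffunE; case: k => [[|[|[|[|k]]]] Hk] //=;
  rewrite ?E0 ?E1 //.
Qed.

Lemma adm_of (b0 b1 : bool) : admissible Phi4 [ffun k => eval (fun x => if x == 0 then b0 else b1) (tnth Phi4 k)].
Proof. by exists (fun x => if x == 0 then b0 else b1) => k; rewrite ffunE. Qed.

Lemma adm_a : admissible Phi4 ja.
Proof. exists (fun _ => false) => k; rewrite ffunE; case: k => [[|[|[|[|k]]]] Hk] //=. Qed.
Lemma adm_b : admissible Phi4 jb.
Proof. exists (fun x => x == 1) => k; rewrite ffunE; case: k => [[|[|[|[|k]]]] Hk] //=. Qed.
Lemma adm_c : admissible Phi4 jc.
Proof. exists (fun x => x == 0) => k; rewrite ffunE; case: k => [[|[|[|[|k]]]] Hk] //=. Qed.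
Lemma adm_d : admissible Phi4 jd.
Proof. exists (fun x => true) => k; rewrite ffunE; case: k => [[|[|[|[|k]]]] Hk] //=. Qed.

Ltac ham := rewrite /hamming !big_ord_recr big_ord0 /= !ffunE; reflexivity.
Lemma h_ab : hamming ja jb = 1. Proof. ham. Qed.
Lemma h_ac : hamming ja jc = 1. Proof. ham. Qed.
Lemma h_ad : hamming ja jd = 3. Proof. ham. Qed.
Lemma h_bc : hamming jb jc = 2. Proof. ham. Qed.
Lemma h_bd : hamming jb jd = 2. Proof. ham. Qed.
Lemma h_cd : hamming jc jd = 4. Proof. ham. Qed.
Lemma h_ba : hamming jb ja = 1. Proof. ham. Qed.
Lemma h_ca : hamming jc ja = 1. Proof. ham. Qed.
Lemma h_da : hamming jd ja = 3. Proof. ham. Qed.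
Lemma h_cb : hamming jc jb = 2. Proof. ham. Qed.
Lemma h_db : hamming jd jb = 2. Proof. ham. Qed.
Lemma h_dc : hamming jd jc = 4. Proof. ham. Qed.
Lemma h_aa : hamming ja ja = 0. Proof. ham. Qed.
Lemma h_bb : hamming jb jb = 0. Proof. ham. Qed.
Lemma h_cc : hamming jc jc = 0. Proof. ham. Qed.
Lemma h_dd : hamming jd jd = 0. Proof. ham. Qed.

Definition PP : profile 4 2 := [ffun i : 'I_2 => if i == ord0 then jb else jc].
Definition PQ : profile 4 2 := [ffun i : 'I_2 => if i == ord0 then jd else jc].

Lemma adm_PP : adm_profile Phi4 PP.
Proof. move=> i; rewrite ffunE; case: (i == ord0); [exact: adm_b|exact: adm_c]. Qed.
Lemma adm_PQ : adm_profile Phi4 PQ.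
Proof. move=> i; rewrite ffunE; case: (i == ord0); [exact: adm_d|exact: adm_c]. Qed.

Definition i0 : 'I_2 := ord0.
Definition i1 : 'I_2 := @Ordinal 2 1 isT.

Lemma ord2P (Q : 'I_2 -> Prop) : Q i0 -> Q i1 -> forall i, Q i.
Proof.
move=> H0 H1 [[|[|k]] Hk] //.
- by have -> : Ordinal Hk = i0 by apply: val_inj.
- by have -> : Ordinal Hk = i1 by apply: val_inj.
Qed.

Lemma PP0 : PP i0 = jb. Proof. by rewrite ffunE. Qed.
Lemma PP1 : PP i1 = jc. Proof. by rewrite ffunE. Qed.
Lemma PQ0 : PQ i0 = jd. Proof. by rewrite ffunE. Qed.
Lemma PQ1 : PQ i1 = jc. Proof. by rewrite ffunE. Qed.

Lemma singleton_of (X : {set judg 4}) w :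
  X != set0 -> (forall J, J \in X -> J = w) -> X = [set w].
Proof.
move=> /set0Pn [x Hx] H; apply/setP => J; rewrite in_set1.
apply/idP/eqP => [/H //| ->]; by rewrite -(H x Hx).
Qed.

Lemma manip (F : rule) (E : set_ext) :
  is_rule F -> valid_ext E -> strategyproof F E ->
  F 4 Phi4 2 PP = [set ja] -> F 4 Phi4 2 PQ = [set jb] -> False.
Proof.
move=> Hr He Hs HP HQ.
apply: (Hs 4 Phi4 2 PP PQ i0 isT isT adm_PP adm_PQ).
- move=> j; move: j; apply: ord2P => //=; by rewrite PP1 PQ1.
rewrite HP HQ PP0.
have [H1 _] := He 4 Phi4 2 i0 jb isT isT adm_b.
rewrite /strict; apply/andP; split.
- by apply/H1; [exact: adm_b|exact: adm_a|rewrite h_bb h_ba].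
- apply/negP => /H1 H; have := H adm_a adm_b; by rewrite h_ba h_bb.
Qed.

Lemma elim_rule (F : rule) (P : profile 4 2) w :
  is_rule F -> adm_profile Phi4 P ->
  (forall J, J \in F 4 Phi4 2 P -> J != w -> J \in [:: ja; jb; jc; jd] -> False) ->
  F 4 Phi4 2 P = [set w].
Proof.
move=> Hr HP H; have [Hn Ha] := Hr 4 Phi4 2 P isT isT HP.
apply: singleton_of => // J HJ; apply/eqP; apply/negPn/negP => Hw.
apply: (H J HJ Hw); case: (adm_char (Ha J HJ)) => ->; rewrite !inE eqxx ?orbT //.
Qed.

Theorem proposition4 (F : rule) (E : set_ext) :
  is_rule F -> valid_ext E -> strategyproof F E ->
  ~ maximin F /\ ~ equity F.
Proof.
move=> Hr He Hs; split => Hm.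
- apply: (@manip F E Hr He Hs).
  + apply: elim_rule adm_PP _ => // J HJ Hw; rewrite !inE => /or4P [] /eqP Je; subst J.
    * by rewrite eqxx in Hw.
    * apply: (Hm 4 Phi4 2 PP _ isT isT adm_PP HJ); exists ja, i1; split; first exact: adm_a.
      apply: ord2P; by rewrite ?PP0 ?PP1 ?h_ba ?h_ca ?h_cb.
    * apply: (Hm 4 Phi4 2 PP _ isT isT adm_PP HJ); exists ja, i0; split; first exact: adm_a.
      apply: ord2P; by rewrite ?PP0 ?PP1 ?h_ba ?h_ca ?h_bc.
    * apply: (Hm 4 Phi4 2 PP _ isT isT adm_PP HJ); exists ja, i0; split; first exact: adm_a.
      apply: ord2P; by rewrite ?PP0 ?PP1 ?h_ba ?h_ca ?h_bd.
  + apply: elim_rule adm_PQ _ => // J HJ Hw; rewrite !inE => /or4P [] /eqP Je; subst J.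
    * apply: (Hm 4 Phi4 2 PQ _ isT isT adm_PQ HJ); exists jb, i0; split; first exact: adm_b.
      apply: ord2P; by rewrite ?PQ0 ?PQ1 ?h_db ?h_cb ?h_da.
    * by rewrite eqxx in Hw.
    * apply: (Hm 4 Phi4 2 PQ _ isT isT adm_PQ HJ); exists jb, i0; split; first exact: adm_b.
      apply: ord2P; by rewrite ?PQ0 ?PQ1 ?h_db ?h_cb ?h_dc.
    * apply: (Hm 4 Phi4 2 PQ _ isT isT adm_PQ HJ); exists jb, i1; split; first exact: adm_b.
      apply: ord2P; by rewrite ?PQ0 ?PQ1 ?h_db ?h_cb ?h_cd.
- apply: (@manip F E Hr He Hs).
  + apply: elim_rule adm_PP _ => // J HJ Hw; rewrite !inE => /or4P [] /eqP Je; subst J.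
    * by rewrite eqxx in Hw.
    * apply: (Hm 4 Phi4 2 PP _ isT isT adm_PP HJ); exists ja, i0, i1; split; first exact: adm_a.
      apply: ord2P; apply: ord2P;
        by rewrite ?PP0 ?PP1 ?h_ba ?h_ca ?h_cb ?h_bb.
    * apply: (Hm 4 Phi4 2 PP _ isT isT adm_PP HJ); exists ja, i0, i1; split; first exact: adm_a.
      apply: ord2P; apply: ord2P;
        by rewrite ?PP0 ?PP1 ?h_ba ?h_ca ?h_bc ?h_cc.
    * apply: (Hm 4 Phi4 2 PP _ isT isT adm_PP HJ); exists ja, i0, i1; split; first exact: adm_a.
      apply: ord2P; apply: ord2P;
        by rewrite ?PP0 ?PP1 ?h_ba ?h_ca ?h_bd ?h_cd.
  + apply: elim_rule adm_PQ _ => // J HJ Hw; rewrite !inE => /or4P [] /eqP Je; subst J.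
    * apply: (Hm 4 Phi4 2 PQ _ isT isT adm_PQ HJ); exists jb, i0, i1; split; first exact: adm_b.
      apply: ord2P; apply: ord2P;
        by rewrite ?PQ0 ?PQ1 ?h_db ?h_cb ?h_da ?h_ca.
    * by rewrite eqxx in Hw.
    * apply: (Hm 4 Phi4 2 PQ _ isT isT adm_PQ HJ); exists jb, i0, i1; split; first exact: adm_b.
      apply: ord2P; apply: ord2P;
        by rewrite ?PQ0 ?PQ1 ?h_db ?h_cb ?h_dc ?h_cc.
    * apply: (Hm 4 Phi4 2 PQ _ isT isT adm_PQ HJ); exists jb, i0, i1; split; first exact: adm_b.
      apply: ord2P; apply: ord2P;
        by rewrite ?PQ0 ?PQ1 ?h_db ?h_cb ?h_dd ?h_cd.
Qed.
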